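(* Let $n\geq 1$, let $\alpha,\beta,d\in\mathbb{Z}$ with $1\leq d\leq n$, and consider the complete graph $K_n$ with an initial configuration $c_0$ in which $d$ of the vertices receive $\alpha$ chips and the remaining $n-d$ vertices receive $\beta$ chips. Then this configuration is tight, i.e. there exists $t\geq 0$ with $c_{t+2}=c_t$.
   Context: Diffusion process: for a finite simple graph $G$ and a chip configuration $c_t:V(G)\to\mathbb{Z}$ (negative values allowed), the next configuration is defined simultaneously for every vertex $u$ by $c_{t+1}(u)=c_t(u)-|\{w\in N(u): c_t(u)>c_t(w)\}|+|\{w\in N(u): c_t(u)<c_t(w)\}|$. A graph with initial configuration is tight if the process is eventually fixed or eventually periodic with period length $2$, equivalently $c_{t+2}=c_t$ for some $t\geq0$. *)

(* Defs.v *)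
From mathcomp Require Import all_boot all_order all_algebra.
Set Implicit Arguments. Unset Strict Implicit. Unset Printing Implicit Defensive.
Import Order.TTheory GRing.Theory Num.Theory.
Local Open Scope ring_scope.

Definition simple_graph (T : finType) (e : rel T) : Prop :=
  symmetric e /\ irreflexive e.

Definition diffuse_step (T : finType) (e : rel T) (c : T -> int) : T -> int :=
  fun u => c u - (#|[set w | e u w && (c w < c u)]|)%:Z
               + (#|[set w | e u w && (c u < c w)]|)%:Z.

Definition diffuse (T : finType) (e : rel T) (c0 : T -> int) (t : nat) : T -> int :=
  iter t (diffuse_step e) c0.

Definition tight (T : finType) (e : rel T) (c0 : T -> int) : Prop :=
  exists t : nat, diffuse e c0 t.+2 = diffuse e c0 t.

Definition complete_rel (n : nat) : rel 'I_n := fun x y => x != y.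

(* Main.v *)
Require Import Defs.
From mathcomp Require Import all_boot all_order all_algebra.
From mathcomp Require Import zify.
From Stdlib Require Import FunctionalExtensionality.
Import Order.TTheory GRing.Theory Num.Theory.
Local Open Scope ring_scope.

Section S.
Variables (n : nat) (D : {set 'I_n}).

Definition cfg (p : int * int) : 'I_n -> int :=
  fun x => if x \in D then p.1 else p.2.

Definition stp0 (m d : int) (p : int * int) : int * int :=
  if p.2 < p.1 then (p.1 - m, p.2 + d)
  else if p.1 < p.2 then (p.1 + m, p.2 - d) else p.
Definition stp := stp0 (#|~: D|)%:Z (#|D|)%:Z.

Lemma step_cfg p : diffuse_step (@complete_rel n) (cfg p) = cfg (stp p).
Proof.
case: p => a b; apply: functional_extensionality => u.
rewrite /diffuse_step /cfg /stp /stp0 /complete_rel /=.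
case uD: (u \in D).
- have E1 : [set w | (u != w) && ((if w \in D then a else b) < a)] =
            if b < a then ~: D else set0.
    apply/setP => w; rewrite !inE; case wD: (w \in D).
      by rewrite ltxx andbF; case: (b < a); rewrite ?inE ?wD.
    have -> : u != w by apply/eqP => E; rewrite E wD in uD.
    by case: (b < a); rewrite ?inE ?wD.
  have E2 : [set w | (u != w) && (a < (if w \in D then a else b))] =
            if a < b then ~: D else set0.
    apply/setP => w; rewrite !inE; case wD: (w \in D).
      by rewrite ltxx andbF; case: (a < b); rewrite ?inE ?wD.
    have -> : u != w by apply/eqP => E; rewrite E wD in uD.
    by case: (a < b); rewrite ?inE ?wD.
  rewrite E1 E2.
  case: (ltgtP b a) => H /=; rewrite ?cards0 -?[Posz 0]/(0%R) ?addr0 ?subr0 //.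
- have E1 : [set w | (u != w) && ((if w \in D then a else b) < b)] =
            if a < b then D else set0.
    apply/setP => w; rewrite !inE; case wD: (w \in D).
      have -> : u != w by apply/eqP => E; rewrite E wD in uD.
      by case: (a < b); rewrite ?inE ?wD.
    by rewrite ltxx andbF; case: (a < b); rewrite ?inE ?wD.
  have E2 : [set w | (u != w) && (b < (if w \in D then a else b))] =
            if b < a then D else set0.
    apply/setP => w; rewrite !inE; case wD: (w \in D).
      have -> : u != w by apply/eqP => E; rewrite E wD in uD.
      by case: (b < a); rewrite ?inE ?wD.
    by rewrite ltxx andbF; case: (b < a); rewrite ?inE ?wD.
  rewrite E1 E2.
  case: (ltgtP b a) => H /=; rewrite ?cards0. all: by rewrite ?subr0 ?addr0.
Qed.

Lemma diffuse_cfg p t : diffuse (@complete_rel n) (cfg p) t = cfg (iter t stp p).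
Proof.
elim: t => [//|t IH]; by rewrite /diffuse iterS -/(diffuse _ _ t) IH step_cfg.
Qed.

Lemma per (m d : nat) : (1 <= m)%N -> (1 <= d)%N ->
  forall k : nat, forall p : int * int, (`|p.1 - p.2| <= k)%N ->
  exists t, iter t.+2 (stp0 m d) p = iter t (stp0 m d) p.
Proof.
move=> m1 d1.
elim=> [|k IH] [a b] /= hk.
- exists 0%N; rewrite /= /stp0 /=.
  have -> : a = b by lia.
  by rewrite /= ltxx /= ltxx.
- case: (ltgtP b a) => H.
  + case: (boolP (a - b < (m + d)%:Z)) => Hs.
    * exists 0%N; rewrite /= {2}/stp0 /= H /stp0 /=.
      have -> : (b + d%:Z < a - m%:Z) = false by apply/negbTE; lia.
      have -> : (a - m%:Z < b + d%:Z) = true by lia.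
      by congr pair; lia.
    * have [t Ht] := IH (stp0 m d (a, b)) ltac:(rewrite /stp0 /= H /=; lia).
      by exists t.+1; move: Ht; rewrite -!iterSr.
  + case: (boolP (b - a < (m + d)%:Z)) => Hs.
    * exists 0%N; rewrite /= {2}/stp0 /= H.
      have -> : (b < a) = false by apply/negbTE; lia.
      rewrite /stp0 /=.
      have -> : (b - d%:Z < a + m%:Z) = true by lia.
      by congr pair; lia.
    * have Hba : (b < a) = false by apply/negbTE; lia.
      have [t Ht] := IH (stp0 m d (a, b)) ltac:(rewrite /stp0 /= H Hba /=; lia).
      by exists t.+1; move: Ht; rewrite -!iterSr.
  + exists 0%N; rewrite /= /stp0 /= H ltxx /= ltxx //.
Qed.

End S.

Theorem theorem17 (n : nat) (alpha beta : int) (d : nat) (D : {set 'I_n}) :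
  (1 <= n)%N -> (1 <= d)%N -> (d <= n)%N -> #|D| = d ->
  tight (@complete_rel n) (fun x => if x \in D then alpha else beta).
Proof.
move=> n1 d1 dn hD.
have -> : (fun x => if x \in D then alpha else beta) = @cfg n D (alpha, beta) by [].
rewrite /tight.
case: (posnP #|~: D|) => hm.
- exists 0%N; rewrite !diffuse_cfg.
  apply: functional_extensionality => x; rewrite /cfg.
  have xD : x \in D.
    apply/negPn/negP => xnD.
    have : x \in ~: D by rewrite inE.
    by rewrite (card0_eq hm) inE.
  by rewrite xD /= /stp /stp0 /=; case: ltgtP => //= _; case: ltgtP => //= _; rewrite hm ?subr0 ?addr0.
- have d1' : (1 <= #|D|)%N by rewrite hD.
  have [t Ht] := @per #|~: D| #|D| hm d1' `|alpha - beta|%N (alpha, beta) (leqnn _).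
  by exists t; rewrite !diffuse_cfg /stp Ht.
Qed.
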